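(* Let $n\ge\ell\ge1$ and consider the saturation SQGT model with $s=\ell$ thresholds $\underline{\eta}=(1,\dots,\ell)$ (outcome of $y$ is $\min(y,\ell)$). Let $k=\lceil\log_{\ell+1}(n-\ell+1)\rceil$. Let $w_0$ be the infinite sequence $0^{\ell}\,(1^{\ell+1}0^{\ell+1})(1^{\ell+1}0^{\ell+1})\cdots$ and, for $1\le j\le k-1$, let $w_j=p(c_j)p(c_j)\cdots$ be the infinite periodic sequence of the word $p(c_j)$, where $c_j=\frac{(\ell+1)^j-1}{\ell}$ and $$p(c)=o(0)^{c}\,0\,o(1)^{c}\cdots0\,o(\ell)^{c}\;1\,u(\ell)^{c}\;1\,u(\ell-1)^{c}\cdots1\,u(0)^{c}\;0,$$ with $o(x)=0^{\ell-x}1^x$, $u(x)=1^x0^{\ell-x}$. Let $\mathbf{M}$ be the $k\times n$ binary matrix whose rows are the first $n$ entries of $w_{k-1},\dots,w_1,w_0$. Then $\mathbf{M}$ solves $\mathrm{Burst}(n,\ell,\underline{\eta})$: for all distinct $i,j\in\{0,\dots,n-\ell\}$, $\min(\mathbf{M}\mathbf{b}_i,\ell)\neq\min(\mathbf{M}\mathbf{b}_j,\ell)$ (entrywise minimum). In particular $\mathrm{Burst}(n,\ell,\underline{\eta})$ can be solved with $\lceil\log_{\ell+1}(n-\ell+1)\rceil$ measurements.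
   Context: Items are indexed $0,\dots,n-1$; $\mathbf{b}_i\in\{0,1\}^n$ is the burst of length $\ell$ with head $i$ (coordinates $i,\dots,i+\ell-1$ equal to $1$, others $0$). $w^c$ denotes the concatenation of $c$ copies of the word $w$. A matrix solves $\mathrm{Burst}(n,\ell,\underline{\eta})$ if distinct length-$\ell$ bursts yield distinct outcome vectors. *)

(* Defs.v *)
From mathcomp Require Import all_boot.
Set Implicit Arguments. Unset Strict Implicit. Unset Printing Implicit Defensive.

(* Binary words are seq nat with entries in {0,1}; infinite sequences are nat -> nat. *)
Definition rep (c : nat) (w : seq nat) : seq nat := flatten (nseq c w).

Definition o_word (l x : nat) : seq nat := nseq (l - x) 0 ++ nseq x 1.
Definition u_word (l x : nat) : seq nat := nseq x 1 ++ nseq (l - x) 0.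

Definition p_word (l c : nat) : seq nat :=
  rep c (o_word l 0)
  ++ flatten [seq 0 :: rep c (o_word l x) | x <- iota 1 l]
  ++ flatten [seq 1 :: rep c (u_word l x) | x <- rev (iota 0 l.+1)]
  ++ [:: 0].

Definition c_j (l j : nat) : nat := ((l.+1) ^ j - 1) %/ l.

Definition w0 (l : nat) (t : nat) : nat :=
  if t < l then 0 else if (t - l) %% (2 * l.+1) < l.+1 then 1 else 0.

Definition w_seq (l j : nat) (t : nat) : nat :=
  if j == 0 then w0 l t
  else let pw := p_word l (c_j l j) in nth 0 pw (t %% size pw).

Definition kmeas (n l : nat) : nat := up_log l.+1 (n - l + 1).

Definition Mmat (n l : nat) (r : 'I_(kmeas n l)) (t : 'I_n) : nat :=
  w_seq l (kmeas n l - 1 - r) t.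

Definition burst (n l i : nat) (t : 'I_n) : nat := (i <= t) && (t < i + l).

Definition outcome (n l i : nat) : {ffun 'I_(kmeas n l) -> nat} :=
  [ffun r => minn (\sum_(t < n) Mmat r t * burst l i t) l].

(* Main.v *)
Require Import Defs.
From mathcomp Require Import all_boot zify.
Set Implicit Arguments. Unset Strict Implicit. Unset Printing Implicit Defensive.

Definition g (l m : nat) : nat := if m <= l then m else 2 * l + 1 - m.
Definition V (N l s : nat) : nat :=
  let q := (s %/ N) %% (2 * l.+1) in let r := s %% N in
  if q <= l then (0 < r) && (l - q <= (r.-1) %% l)
  else (r == 0) || ((r.-1) %% l < 2 * l + 1 - q).

Lemma dm N m r : r < N -> (m * N + r) %/ N = m /\ (m * N + r) %% N = r.
Proof.
move=> hr; have N0 : 0 < N by lia.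
by rewrite divnMDl // divn_small // addn0 modnMDl modn_small.
Qed.

Lemma modS_eq P x : 0 < P ->
  x.+1 %% P = if (x %% P).+1 == P then 0 else (x %% P).+1.
Proof.
move=> P0; rewrite {1}(divn_eq x P) -addnS.
have := ltn_pmod x P0.
case: eqP => h hl.
  by rewrite h -[X in _ + X]mul1n -mulnDl modnMl.
rewrite modnMDl modn_small //; lia.
Qed.

Lemma mod_lt2 P a : a < 2 * P -> a %% P = if a < P then a else a - P.
Proof.
move=> h; case: ltnP => h2; first by rewrite modn_small.
have -> : a = 1 * P + (a - P) by lia.
rewrite modnMDl modn_small; lia.
Qed.

Ltac noif b := lazymatch b with context [if _ then _ else _] => fail | _ => idtac end.
Ltac smash := repeat (match goal with
  | |- context [if ?b then _ else _] => noif b; case: (boolP b) => ?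
  | |- context [?a && ?b] => noif a; case: (boolP a) => ?
  | |- context [?a || ?b] => noif a; case: (boolP a) => ?
  | |- context [nat_of_bool ?b] => noif b; case: (boolP b) => ?
  end; rewrite /= ?addn0 ?add0n); lia.

Lemma PS_big N l c s : 0 < l -> 0 < c -> N = c * l + 1 -> 0 < s ->
  g l (((s.-1) %/ N) %% (2 * l.+1)) + V N l (s + l) =
  g l ((s %/ N) %% (2 * l.+1)) + V N l s.
Proof.
move=> l0 c0 HN s0.
have N0 : 0 < N by lia.
have lN : l < N by nia.
set P := 2 * l.+1.
have P0 : 0 < P by rewrite /P; lia.
have hs := divn_eq s N.
set m := s %/ N in hs *; set r := s %% N in hs *.
have rN : r < N by rewrite /r ltn_pmod.
rewrite /V.
have -> : s %/ N = m by [].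
have -> : s %% N = r by [].
have qP := ltn_pmod m P0.
case: (posnP r) => [r0|rpos].
-
  have m0 : 0 < m by move: hs; rewrite r0 addn0; case: (m) => //=; lia.
  have -> : (s.-1) %/ N = m.-1.
    have -> : s.-1 = m.-1 * N + N.-1 by rewrite hs r0; nia.
    by case: (dm m.-1 (_ : N.-1 < N)) => //; lia.
  have [-> ->] : (s + l) %/ N = m /\ (s + l) %% N = l.
    by rewrite hs r0 addn0; apply: dm.
  rewrite r0 (modn_small (_ : l.-1 < l)); last lia.
  have -> : m = (m.-1).+1 by lia.
  rewrite modS_eq //.
  have := ltn_pmod m.-1 P0; rewrite /g /P.
  move: (m.-1 %% _) => q hq.
  clear -hq l0; smash.
- have -> : (s.-1) %/ N = m.
    have -> : s.-1 = m * N + r.-1 by lia.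
    by case: (dm m (_ : r.-1 < N)) => //; lia.
  have [e [he1 he2 hre]] : exists e, [/\ 1 <= e, e <= N & r = N - e] by exists (N - r); split; lia.
  case: (ltnP (r + l) N) => hrl.
  + have [-> ->] : (s + l) %/ N = m /\ (s + l) %% N = r + l.
      by rewrite hs -addnA; apply: dm.
    have -> : (r + l).-1 = r.-1 + l by lia.
    rewrite modnDr; smash.
  + have e_l : e <= l by lia.
    have [-> ->] : (s + l) %/ N = m.+1 /\ (s + l) %% N = l - e.
      have -> : s + l = m.+1 * N + (l - e) by rewrite hs; nia.
      by apply: dm; lia.
    have -> : r.-1 %% l = l - e.
      have -> : r.-1 = (c - 1) * l + (l - e) by rewrite hre HN; nia.
      by rewrite modnMDl modn_small //; lia.
    have -> : (l - e).-1 %% l = (l - e).-1 by rewrite modn_small //; lia.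
    rewrite modS_eq //.
    have := ltn_pmod m P0; rewrite /g /P.
    move: (m %% _) => q hq.
    clear -hq e_l he1 l0; smash.
Qed.

Lemma PS_one l s : 0 < l -> 0 < s ->
  g l (((s.-1) %/ 1) %% (2 * l.+1)) + V 1 l (s + l) =
  g l ((s %/ 1) %% (2 * l.+1)) + V 1 l s.
Proof.
move=> l0 s0; rewrite /V !divn1 !modn1.
have P0 : 0 < 2 * l.+1 by lia.
have -> : s = (s.-1).+1 by lia.
have -> : (s.-1).+1 + l = (s.-1) + l.+1 by lia.
rewrite -modnDml modS_eq //.
have := ltn_pmod s.-1 P0; move: (s.-1 %% _) => q hq.
rewrite (@mod_lt2 _ (q + l.+1)); last lia.
rewrite /g; clear -hq l0; smash.
Qed.

Definition goodN N l := N = 1 \/ exists c, 0 < c /\ N = c * l + 1.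

Lemma PS N l s : 0 < l -> goodN N l -> 0 < s ->
  g l (((s.-1) %/ N) %% (2 * l.+1)) + V N l (s + l) =
  g l ((s %/ N) %% (2 * l.+1)) + V N l s.
Proof.
move=> l0 [->|[c [c0 HN]]] s0; first exact: PS_one.
exact: PS_big HN s0.
Qed.

Lemma Vbase N l s : 0 < l -> goodN N l -> 0 < s -> s <= l -> V N l s = 0.
Proof.
move=> l0 [->|[c [c0 HN]]] s0 sl; rewrite /V.
  rewrite divn1 modn1 (@modn_small s); last lia.
  by rewrite sl.
have sN : s < N by nia.
rewrite divn_small // mod0n modn_small // modn_small; last lia.
smash.
Qed.

Lemma window N l i : 0 < l -> goodN N l ->
  \sum_(i <= t < i + l) V N l t.+1 = g l ((i %/ N) %% (2 * l.+1)).
Proof.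
move=> l0 gN; elim: i => [|i IH].
  rewrite add0n big_mkord div0n mod0n /g /= big1 // => t _.
  by apply: Vbase => //; have := ltn_ord t; lia.
have e1 := @big_ltn _ 0 addn i (i + l) (fun t => V N l t.+1).
have e2 := @big_nat_recr _ 0 addn (i + l) i.+1 (fun t => V N l t.+1).
have := PS (s:=i.+1) l0 gN (ltn0Sn i).
rewrite /= in e1 e2 *.
have -> : i.+1 + l = (i + l).+1 by lia.
rewrite e2; last lia.
rewrite e1 in IH; last lia.
have -> : (i + l).+1 = i.+1 + l by lia.
lia.
Qed.

Lemma digit0 l i : i %% (2 * l.+1) = odd (i %/ l.+1) * l.+1 + i %% l.+1.
Proof.
have b0 : 0 < l.+1 by [].
have hi := divn_eq i l.+1.
have hd := ltn_pmod i b0.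
have ho := odd_double_half (i %/ l.+1).
move: (i %/ l.+1) (i %% l.+1) hi hd ho => i1 d hi hd ho.
rewrite hi -ho.
have -> : (odd i1 + (i1./2).*2) * l.+1 + d = (i1./2) * (2 * l.+1) + (odd i1 * l.+1 + d).
  rewrite -!muln2; case: (odd i1) => /=; lia.
rewrite modnMDl modn_small //; case: (odd i1) => /=; lia.
Qed.

Lemma gray l k : forall i i', i < l.+1 ^ k -> i' < l.+1 ^ k ->
  (forall j, j < k -> g l ((i %/ l.+1 ^ j) %% (2 * l.+1)) =
                      g l ((i' %/ l.+1 ^ j) %% (2 * l.+1))) -> i = i'.
Proof.
elim: k => [|k IH] i i' hi hi' H.
  rewrite expn0 in hi hi'; lia.
have b0 : 0 < l.+1 by [].
have e1 : i %/ l.+1 = i' %/ l.+1.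
  apply: IH.
  - by rewrite ltn_divLR // -expnSr.
  - by rewrite ltn_divLR // -expnSr.
  move=> j hj; have := H j.+1 hj.
  by rewrite expnS !divnMA.
have := H 0 (ltn0Sn k); rewrite expn0 !divn1 !digit0 e1.
have hi1 := divn_eq i l.+1; have hi2 := divn_eq i' l.+1.
have := ltn_pmod i b0; have := ltn_pmod i' b0.
rewrite e1 in hi1.
move: (i %% l.+1) (i' %% l.+1) (i' %/ l.+1) hi1 hi2 => d d' q -> -> hd' hd.
rewrite /g; case: (odd q) => /=; smash.
Qed.

Lemma size_rep c w : size (rep c w) = c * size w.
Proof. by elim: c => //= c IH; rewrite /rep /= size_cat -/(rep c w) IH mulSn. Qed.

Lemma nth_rep c w k : k < c * size w -> nth 0 (rep c w) k = nth 0 w (k %% size w).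
Proof.
elim: c k => [|c IH] k; first by rewrite mul0n.
rewrite /rep /= -/(rep c w) nth_cat mulSn => hk.
case: ltnP => h; first by rewrite modn_small.
rewrite IH; last lia.
have {2}-> : k = (k - size w) + size w by lia.
by rewrite modnDr.
Qed.

Lemma size_flat (f : nat -> seq nat) L s : (forall x, x \in s -> size (f x) = L) ->
  size (flatten (map f s)) = size s * L.
Proof.
elim: s => //= x s IH hf; rewrite size_cat IH ?hf ?mulSn ?mem_head //.
by move=> y hy; apply: hf; rewrite in_cons hy orbT.
Qed.

Lemma nth_flat (f : nat -> seq nat) L s k : (forall x, x \in s -> size (f x) = L) ->
  k < size s * L -> nth 0 (flatten (map f s)) k = nth 0 (f (nth 0 s (k %/ L))) (k %% L).
Proof.
elim: s k => [|x s IH] k hf; first by rewrite mul0n.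
have hs : forall y, y \in s -> size (f y) = L.
  by move=> y hy; apply: hf; rewrite in_cons hy orbT.
rewrite /= nth_cat hf ?mem_head // mulSn => hk.
case: ltnP => h; first by rewrite divn_small // modn_small.
have L0 : 0 < L by lia.
rewrite (IH (k - L) hs); last by rewrite ltn_subLR.
have ek : k = 1 * L + (k - L) by lia.
have -> : k %/ L = ((k - L) %/ L).+1 by rewrite {1}ek divnMDl.
have -> : k %% L = (k - L) %% L by rewrite {1}ek modnMDl.
by [].
Qed.

Lemma nth_o l x a : a < l -> x <= l -> nth 0 (o_word l x) a = (l - x <= a).
Proof.
move=> ha hx; rewrite /o_word nth_cat size_nseq !nth_nseq.
smash.
Qed.

Lemma nth_u l x a : a < l -> x <= l -> nth 0 (u_word l x) a = (a < x).
Proof.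
move=> ha hx; rewrite /u_word nth_cat size_nseq !nth_nseq.
smash.
Qed.

Lemma size_o l x : x <= l -> size (o_word l x) = l.
Proof. rewrite /o_word size_cat !size_nseq; lia. Qed.
Lemma size_u l x : x <= l -> size (u_word l x) = l.
Proof. rewrite /u_word size_cat !size_nseq; lia. Qed.

Lemma Vblk N l x r : r < N -> x < 2 * l.+1 ->
  V N l (x * N + r) = if x <= l then (0 < r) && (l - x <= r.-1 %% l)
                      else (r == 0) || (r.-1 %% l < 2 * l + 1 - x).
Proof. by move=> hr hx; rewrite /V; case: (dm x hr) => -> ->; rewrite modn_small. Qed.

Lemma size_p l c : 0 < l -> size (p_word l c) = 2 * l.+1 * (c * l + 1).
Proof.
move=> l0; rewrite /p_word !size_cat size_rep size_o //.
rewrite (@size_flat _ (c * l + 1)); last first.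
  move=> x; rewrite mem_iota => hx /=; rewrite size_rep size_o; lia.
rewrite (@size_flat _ (c * l + 1)); last first.
  move=> x; rewrite mem_rev mem_iota => hx /=; rewrite size_rep size_u; lia.
rewrite size_iota size_rev size_iota /=; lia.
Qed.

Lemma nth_p l c u : 0 < l -> 0 < c -> u < 2 * l.+1 * (c * l + 1) ->
  nth 0 (p_word l c) u = V (c * l + 1) l u.+1.
Proof.
move=> l0 c0 hu; set N := c * l + 1.
have N0 : 0 < N by rewrite /N; lia.
have lN : l < N by rewrite /N; nia.
rewrite /p_word nth_cat size_rep size_o //.
case: (ltnP u (c * l)) => h1.
  rewrite nth_rep ?size_o // nth_o //; last exact: ltn_pmod.
  have -> : u.+1 = 0 * N + u.+1 by [].
  rewrite Vblk //; last by rewrite /N; nia.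
rewrite nth_cat (@size_flat _ N); last first.
  move=> x; rewrite mem_iota => hx /=; rewrite size_rep size_o /N; lia.
rewrite size_iota.
set v := u - c * l.
case: (ltnP v (l * N)) => h2.
  rewrite (@nth_flat _ N); last by rewrite size_iota.
    2: move=> x; rewrite mem_iota => hx /=; rewrite size_rep size_o /N; lia.
  have hq : v %/ N < l by rewrite ltn_divLR // mulnC.
  have hr := ltn_pmod v N0.
  rewrite nth_iota //.
  have -> : u.+1 = (1 + v %/ N) * N + v %% N.
    have := divn_eq v N; move: (v %/ N) (v %% N) => a b; rewrite /v /N; nia.
  rewrite Vblk //; last lia.
  move: (v %/ N) (v %% N) hq hr => q r hq hr.
  case: r hr => [|r] hr /=; first by smash.
  have hx : 1 + q <= l by lia.
  rewrite nth_rep size_o //; last by rewrite /N in hr; lia.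
  rewrite nth_o //; last exact: ltn_pmod.
  have := ltn_pmod r l0; smash.
rewrite nth_cat (@size_flat _ N); last first.
  move=> x; rewrite mem_rev mem_iota => hx /=; rewrite size_rep size_u /N; lia.
rewrite size_rev size_iota.
set v' := v - l * N.
case: (ltnP v' (l.+1 * N)) => h3.
  rewrite (@nth_flat _ N); last by rewrite size_rev size_iota.
    2: move=> x; rewrite mem_rev mem_iota => hx /=; rewrite size_rep size_u /N; lia.
  have hq : v' %/ N < l.+1 by rewrite ltn_divLR // mulnC.
  have hr := ltn_pmod v' N0.
  rewrite nth_rev; last by rewrite size_iota.
  have e3 : nth 0 (iota 0 l.+1) (l.+1 - (v' %/ N).+1) = l - v' %/ N.
    by move: (v' %/ N) hq => q hq; rewrite nth_iota; lia.
  rewrite size_iota e3.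
  have -> : u.+1 = (l.+1 + v' %/ N) * N + v' %% N.
    have := divn_eq v' N; move: (v' %/ N) (v' %% N) => a b; rewrite /v' /v /N; nia.
  rewrite Vblk //; last lia.
  move: (v' %/ N) (v' %% N) hq hr => q r hq hr.
  case: r hr => [|r] hr /=; first by smash.
  have hx : l.+1 - q.+1 <= l by lia.
  rewrite nth_rep size_u //; last by rewrite /N in hr; lia.
  rewrite nth_u //; last exact: ltn_pmod.
  have := ltn_pmod r l0; smash.
have -> : v' - l.+1 * N = 0 by rewrite /v' /v; lia.
have -> : u.+1 = 2 * l.+1 * N by rewrite /v' /v in h3 *; lia.
rewrite /V mulnK // modnn modnMl /=; smash.
Qed.

Lemma cj_ex l j : 0 < l -> 0 < j -> exists c, [/\ 0 < c, l.+1 ^ j = c * l + 1 & c_j l j = c].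
Proof.
move=> l0; elim: j => // j IH _.
case: (posnP j) => [->|jp].
  exists 1; split => //; first by rewrite expn1; lia.
  by rewrite /c_j expn1 subn1 /= divnn l0.
case: (IH jp) => c [c0 e _].
have e' : l.+1 ^ j.+1 = (c * l + c + 1) * l + 1 by rewrite expnS e; nia.
exists (c * l + c + 1); split => //; first lia.
by rewrite /c_j e' addnK mulnK.
Qed.

Lemma goodN_pow l j : 0 < l -> goodN (l.+1 ^ j) l.
Proof.
move=> l0; case: (posnP j) => [->|jp]; first by left.
by right; case: (cj_ex l0 jp) => c [c0 e _]; exists c.
Qed.

Lemma Vper N l s : 0 < N -> V N l s = V N l (s %% (2 * l.+1 * N)).
Proof.
move=> N0; rewrite /V.
have P0 : 0 < 2 * l.+1 by lia.
have hs := divn_eq s (2 * l.+1 * N).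
move: (s %/ (2 * l.+1 * N)) (s %% (2 * l.+1 * N)) hs => a b ->.
have -> : a * (2 * l.+1 * N) + b = (a * (2 * l.+1)) * N + b by rewrite mulnA.
rewrite divnMDl // !modnMDl.
by [].  
Qed.

Lemma wV l j t : 0 < l -> w_seq l j t = V (l.+1 ^ j) l t.+1.
Proof.
move=> l0; rewrite /w_seq.
case: eqP => [->|/eqP jn].
  rewrite expn0 /w0 /V !divn1 !modn1.
  have P0 : 0 < 2 * l.+1 by lia.
  case: ltnP => h.
    by rewrite modn_small ?h //; lia.
  have -> : t.+1 = (t - l) + l.+1 by lia.
  rewrite -modnDml.
  have := ltn_pmod (t - l) P0; move: ((t - l) %% _) => q hq.
  rewrite (@mod_lt2 _ (q + l.+1)); last lia.
  smash.
have jp : 0 < j by lia.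
case: (cj_ex l0 jp) => c [c0 e ->].
rewrite e size_p // nth_p //; last by apply: ltn_pmod; nia.
have N0 : 0 < c * l + 1 by lia.
rewrite (Vper l (t %% _).+1 N0) (Vper l t.+1 N0).
by rewrite -[(t %% _).+1]addn1 -[t.+1]addn1 modnDml.
Qed.

Lemma g_le l m : g l m <= l.
Proof. rewrite /g; smash. Qed.

Lemma key n l i (r : 'I_(kmeas n l)) : 0 < l -> i + l <= n ->
  outcome n l i r = g l ((i %/ l.+1 ^ (kmeas n l - 1 - r)) %% (2 * l.+1)).
Proof.
move=> l0 hil; rewrite /outcome ffunE /Mmat /burst.
set J := kmeas n l - 1 - r.
rewrite -(big_mkord xpredT (fun t => w_seq l J t * ((i <= t) && (t < i + l)))).
rewrite (big_cat_nat _ (n := i)) //=; last lia.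
rewrite (big_cat_nat _ (m := i) (n := i + l)) //=; last lia.
have z1 : \sum_(0 <= t < i) w_seq l J t * ((i <= t) && (t < i + l)) = 0.
  rewrite big_nat_cond big1 // => t /andP [/andP [_ ht] _].
  by rewrite leqNgt ht muln0.
have z2 : \sum_(i + l <= t < n) w_seq l J t * ((i <= t) && (t < i + l)) = 0.
  rewrite big_nat_cond big1 // => t /andP [/andP [ht _] _].
  by rewrite (leqNgt (i + l)) in ht; rewrite (negbTE ht) andbF muln0.
rewrite z1 z2 add0n addn0.
rewrite (eq_big_nat _ _ (F2 := fun t => V (l.+1 ^ J) l t.+1)); last first.
  by move=> t /andP [h1 h2]; rewrite h1 h2 muln1 wV.
rewrite window //; last exact: goodN_pow.
apply/minn_idPl; exact: g_le.
Qed.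

Theorem mainTheorem4 (n l : nat) :
  1 <= l -> l <= n ->
  forall i j : nat, i <= n - l -> j <= n - l -> i <> j ->
  outcome n l i <> outcome n l j.
Proof.
move=> l0 ln i j hi hj hij hout; apply: hij.
set k := kmeas n l.
have hk : n - l + 1 <= l.+1 ^ k by apply: up_logP.
apply: (@gray l k); [lia | lia |].
move=> j' hj'.
have hr : k - 1 - j' < k by lia.
have := congr1 (fun f : {ffun 'I_k -> nat} => f (Ordinal hr)) hout => /=.
rewrite !key //; try lia.
by have -> : k - 1 - (k - 1 - j') = j' by lia.
Qed.
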